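(* For a finite set $T$ of prototiles of the binary Wang tiling problem, the following are equivalent: (i) $T$ tiles the square binary tiling; (ii) $T$ tiles every binary tiling of the half-plane; (iii) $T$ tiles every finite union of tiles of the square binary tiling and of every binary tiling of the half-plane.
   Context: The square binary tiling is the recursive self-similar subdivision of a square into $2\times1$ rectangles: one rectangle covers the upper half of the square, and the lower left and lower right quadrants are each subdivided by the same pattern recursively. Each tile's bottom side is the union of the top sides of its two children, and it shares its full left and right sides with same-sized neighbors. A binary tiling of the half-plane $\{y>0\}$ is a tiling by axis-parallel $2\times1$ rectangles with the same local structure: for some $c>0$ and each integer $k$, the tiles in the strip $c2^{k-1}\le y\le c2^{k}$ are the rectangles $[a_k+jc2^{k},a_k+(j+1)c2^{k}]\times[c2^{k-1},c2^{k}]$, $j\in\mathbb{Z}$, with offsets chosen so that each tile's bottom side is the union of the top sides of two tiles of the next lower strip (in the Poincaré half-plane model, these tiles are congruent). A prototile is a $2\times 1$ rectangle whose five edges (top, left, right, and the two halves of the bottom side) are colored. $T$ tiles a set of tiles if one can assign to each tile the coloring of some prototile in $T$ so that any two tiles sharing an edge give that edge the same color. *)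

(* Defs.v *)
From Stdlib Require Import Reals ZArith List.
Open Scope R_scope.

Inductive edge : Type := ETop | ELeft | ERight | EBotL | EBotR.

(* A prototile: a 2x1 rectangle with its five edges coloured. *)
Record prototile (C : Type) : Type := Proto {
  ctop : C; cleft : C; cright : C; cbotl : C; cbotr : C }.
Arguments Proto {C}.
Arguments ctop {C}. Arguments cleft {C}. Arguments cright {C}.
Arguments cbotl {C}. Arguments cbotr {C}.

Definition color {C : Type} (p : prototile C) (e : edge) : C :=
  match e with
  | ETop => ctop p | ELeft => cleft p | ERight => cright p
  | EBotL => cbotl p | EBotR => cbotr p
  end.

(* An axis-parallel rectangle [rx, rx + rw] x [ry, ry + rw/2]. *)
Record rect : Type := Rect { rx : R; ry : R; rw : R }.

Definition point : Type := (R * R)%type.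

(* Edges as (oriented: left-to-right / bottom-to-top) segments. *)
Definition seg (r : rect) (e : edge) : point * point :=
  let x := rx r in let y := ry r in let w := rw r in let h := w / 2 in
  match e with
  | ETop   => ((x, y + h), (x + w, y + h))
  | ELeft  => ((x, y), (x, y + h))
  | ERight => ((x + w, y), (x + w, y + h))
  | EBotL  => ((x, y), (x + w / 2, y))
  | EBotR  => ((x + w / 2, y), (x + w, y))
  end.

Definition tiles {C I : Type} (T : list (prototile C)) (tile : I -> rect)
    (S : I -> Prop) : Prop :=
  exists f : {i : I | S i} -> prototile C,
    (forall x, In (f x) T) /\
    (forall (x y : {i : I | S i}) (e e' : edge),
        seg (tile (proj1_sig x)) e = seg (tile (proj1_sig y)) e' ->
        color (f x) e = color (f y) e').

(* Square binary tiling of [0,1]^2: tile (n, j), j < 2^n, is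
   [j/2^n, (j+1)/2^n] x [1/2^(n+1), 1/2^n]. *)
Definition sq_index : Type := {p : nat * nat | (snd p < 2 ^ fst p)%nat}.

Definition sq_rect (i : sq_index) : rect :=
  let n := fst (proj1_sig i) in let j := snd (proj1_sig i) in
  Rect (INR j / 2 ^ n) (1 / 2 ^ (S n)) (1 / 2 ^ n).

(* Binary tiling of the half-plane with parameters c and offsets a:
   tile (k, j) is [a_k + j c 2^k, a_k + (j+1) c 2^k] x [c 2^(k-1), c 2^k]. *)
Definition hp_rect (c : R) (a : Z -> R) (p : Z * Z) : rect :=
  let k := fst p in let j := snd p in
  Rect (a k + IZR j * c * powerRZ 2 k) (c * powerRZ 2 (k - 1)) (c * powerRZ 2 k).

Definition is_hp_tiling (c : R) (a : Z -> R) : Prop :=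
  0 < c /\
  forall k j : Z, exists j' : Z,
    seg (hp_rect c a ((k - 1)%Z, j')) ETop = seg (hp_rect c a (k, j)) EBotL /\
    seg (hp_rect c a ((k - 1)%Z, (j' + 1)%Z)) ETop = seg (hp_rect c a (k, j)) EBotR.

(* Main.v *)
Require Import Defs.
From Stdlib Require Import Reals ZArith List Lia Lra Classical ClassicalEpsilon Arith Cantor.

Definition okR {C I : Type} (tile : I -> rect) (i j : I) (p q : prototile C) :=
  forall e e', seg (tile i) e = seg (tile j) e' -> color p e = color q e'.

Definition validk {C I : Type} (T : list (prototile C)) (tile : I -> rect)
  (enum : nat -> I) (k : nat) (h : nat -> prototile C) :=
  (forall a, (a < k)%nat -> In (h a) T) /\
  (forall a b, (a < k)%nat -> (b < k)%nat -> okR tile (enum a) (enum b) (h a) (h b)).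

Definition agree {X : Type} (n : nat) (g h : nat -> X) := forall a, (a < n)%nat -> g a = h a.

Definition Ext {C I : Type} (T : list (prototile C)) (tile : I -> rect)
  (enum : nat -> I) (n : nat) (g : nat -> prototile C) :=
  forall m, exists h, agree n g h /\ validk T tile enum (n + m) h.

Definition upd {X : Type} (g : nat -> X) (n : nat) (x : X) : nat -> X :=
  fun a => if Nat.eqb a n then x else g a.

Lemma validk_mono {C I : Type} T (tile : I -> rect) enum k k' (h : nat -> prototile C) :
  (k <= k')%nat -> validk T tile enum k' h -> validk T tile enum k h.
Proof. intros Hk [H1 H2]; split; intros; [apply H1 | apply H2]; lia. Qed.

Lemma bound_list {X : Type} (Q : X -> nat -> Prop) (l : list X) :
  (forall x m m', Q x m -> (m <= m')%nat -> Q x m') ->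
  (forall x, In x l -> exists m, Q x m) -> exists M, forall x, In x l -> Q x M.
Proof.
  intros Hmono; induction l as [|y l IH]; intros H.
  - exists 0%nat; intros x [].
  - destruct (H y (or_introl eq_refl)) as [m1 Hm1].
    destruct IH as [M HM]. { intros x Hx; apply H; right; exact Hx. }
    exists (Nat.max m1 M). intros x [<-|Hx].
    + apply (Hmono _ m1); [exact Hm1| lia].
    + apply (Hmono _ M); [apply HM; exact Hx| lia].
Qed.

Lemma step_ex {C I : Type} T (tile : I -> rect) enum n (g : nat -> prototile C) :
  Ext T tile enum n g -> exists x, Ext T tile enum (S n) (upd g n x).
Proof.
  intros HE. apply NNPP; intros Hn.
  set (Q := fun x m => ~ exists h, agree (S n) (upd g n x) h /\ validk T tile enum (S n + m) h).
  assert (HQ : forall x, In x T -> exists m, Q x m).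
  { intros x _. apply NNPP; intros Hx. apply Hn. exists x. intros m.
    apply NNPP; intros Hm. apply Hx. exists m. exact Hm. }
  destruct (bound_list Q T) as [M HM]; [| exact HQ |].
  { intros x m m' Hq Hle [h [Ha Hv]]. apply Hq. exists h. split; [exact Ha|].
    apply (validk_mono _ _ _ _ (S n + m')); [lia| exact Hv]. }
  destruct (HE (S M)) as [h [Ha Hv]].
  assert (HT : In (h n) T) by (apply (proj1 Hv); lia).
  apply (HM _ HT). exists h. split.
  - intros a Hlt. unfold upd. destruct (Nat.eqb_spec a n) as [->|Hne]; [reflexivity|].
    apply Ha; lia.
  - replace (S n + M)%nat with (n + S M)%nat by lia. exact Hv.
Qed.

Definition stepf {C I : Type} T (tile : I -> rect) enum n (g : nat -> prototile C)
  (H : Ext T tile enum n g) : {x | Ext T tile enum (S n) (upd g n x)} :=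
  constructive_indefinite_description _ (step_ex T tile enum n g H).

Fixpoint build {C I : Type} T (tile : I -> rect) enum (g0 : nat -> prototile C)
  (H0 : Ext T tile enum 0 g0) (n : nat) : {g | Ext T tile enum n g} :=
  match n with
  | O => exist _ g0 H0
  | S k => let s := build T tile enum g0 H0 k in
           exist _ (upd (proj1_sig s) k (proj1_sig (stepf T tile enum k _ (proj2_sig s))))
                   (proj2_sig (stepf T tile enum k _ (proj2_sig s)))
  end.

Lemma build_agree {C I : Type} T (tile : I -> rect) enum (g0 : nat -> prototile C) H0 n m :
  (n <= m)%nat -> agree n (proj1_sig (build T tile enum g0 H0 n)) (proj1_sig (build T tile enum g0 H0 m)).
Proof.
  induction m as [|m IH]; intros Hle.
  - assert (n = 0)%nat by lia. subst. intros a Ha; lia.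
  - destruct (Nat.eq_dec n (S m)) as [->|Hne]; [intros a _; reflexivity|].
    intros a Ha. rewrite (IH ltac:(lia) a Ha). simpl. unfold upd.
    destruct (Nat.eqb_spec a m); [lia | reflexivity].
Qed.

Lemma mem_enum {I : Type} (enum : nat -> I) a m : (a < m)%nat -> In (enum a) (map enum (seq 0 m)).
Proof. intros H. apply in_map. apply in_seq. lia. Qed.

Lemma compact {C I : Type} (T : list (prototile C)) (tile : I -> rect) (enum : nat -> I)
  (Hs : forall i, exists n, enum n = i) :
  (forall L, tiles T tile (fun i => In i L)) -> tiles T tile (fun _ => True).
Proof.
  intros HL.
  destruct (HL (enum 0%nat :: nil)) as [f0 [Hf0 _]].
  set (d := f0 (exist _ (enum 0%nat) (or_introl eq_refl))).
  assert (Hd : In d T) by apply Hf0.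
  assert (H0 : Ext T tile enum 0 (fun _ => d)).
  { intros m. destruct (HL (map enum (seq 0 m))) as [f [Hf1 Hf2]].
    exists (fun a => match lt_dec a m with
                     | left H => f (exist _ (enum a) (mem_enum enum a m H))
                     | right _ => d end).
    split; [intros a Ha; lia|]. simpl. split.
    - intros a Ha. destruct (lt_dec a m); [apply Hf1| lia].
    - intros a b Ha Hb e e' Hs'. destruct (lt_dec a m); [|lia]. destruct (lt_dec b m); [|lia].
      apply Hf2. exact Hs'. }
  set (G := fun a => proj1_sig (build T tile enum _ H0 (S a)) a).
  assert (HG : forall a b, (a < b)%nat -> G a = proj1_sig (build T tile enum _ H0 b) a).
  { intros a b Hab. unfold G. apply build_agree; lia. }
  assert (HV : forall N, validk T tile enum N (proj1_sig (build T tile enum _ H0 N))).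
  { intros N. destruct (build T tile enum _ H0 N) as [g Hg]. simpl.
    destruct (Hg 0%nat) as [h [Ha Hv]]. rewrite Nat.add_0_r in Hv.
    destruct Hv as [Hv1 Hv2]. split.
    - intros a Hlt. rewrite Ha by exact Hlt. apply Hv1; exact Hlt.
    - intros a b Hla Hlb. rewrite (Ha a Hla), (Ha b Hlb). apply Hv2; assumption. }
  set (idx := fun i : I => proj1_sig (constructive_indefinite_description _ (Hs i))).
  assert (Hidx : forall i, enum (idx i) = i).
  { intros i. unfold idx. destruct (constructive_indefinite_description _ (Hs i)); assumption. }
  exists (fun x => G (idx (proj1_sig x))). split.
  - intros x. set (a := idx (proj1_sig x)). rewrite (HG a (S a)) by lia.
    apply (proj1 (HV (S a))). lia.
  - intros x y e e' Hseg.
    set (a := idx (proj1_sig x)). set (b := idx (proj1_sig y)).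
    set (N := S (Nat.max a b)).
    rewrite (HG a N) by lia. rewrite (HG b N) by lia.
    apply (proj2 (HV N)); try lia.
    unfold a, b. rewrite !Hidx. exact Hseg.
Qed.
Open Scope R_scope.

Definition psi (al be : R) (p : point) : point := (al * fst p + be, al * snd p).
Definition psis (al be : R) (s : point * point) := (psi al be (fst s), psi al be (snd s)).

Lemma seg_aff (r r' : rect) al be e :
  rx r' = al * rx r + be -> ry r' = al * ry r -> rw r' = al * rw r ->
  seg r' e = psis al be (seg r e).
Proof.
  destruct r as [x y w], r' as [x' y' w']; simpl; intros -> -> ->.
  destruct e; unfold psis, psi, seg; simpl. idtac.
  all: apply f_equal2; apply f_equal2; field.
Qed.

Lemma P2add k z : powerRZ 2 (k + z) = powerRZ 2 k * powerRZ 2 z.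
Proof. apply powerRZ_add. lra. Qed.

Lemma P2pos k : 0 < powerRZ 2 k.
Proof. apply powerRZ_lt. lra. Qed.

Lemma P2m1 k : powerRZ 2 (k - 1) = powerRZ 2 k / 2.
Proof. replace (k - 1)%Z with (k + -1)%Z by lia. rewrite P2add. simpl. field. Qed.

Lemma P2nat n : powerRZ 2 (Z.of_nat n) = 2 ^ n.
Proof. rewrite pow_powerRZ. reflexivity. Qed.

Lemma P2neg n : powerRZ 2 (- Z.of_nat n) = / 2 ^ n.
Proof.
  assert (H := P2add (- Z.of_nat n) (Z.of_nat n)).
  replace (- Z.of_nat n + Z.of_nat n)%Z with 0%Z in H by lia. simpl in H.
  rewrite P2nat in H. assert (0 < 2 ^ n) by (apply pow_lt; lra).
  apply (Rmult_eq_reg_r (2 ^ n)); [|lra]. rewrite <- H. field. lra.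
Qed.

Lemma sq_hp n j (H : (j < 2 ^ n)%nat) :
  sq_rect (exist _ (n, j) H) = hp_rect 1 (fun _ => 0) ((- Z.of_nat n)%Z, Z.of_nat j).
Proof.
  unfold sq_rect, hp_rect; simpl.
  assert (0 < 2 ^ n) by (apply pow_lt; lra).
  rewrite P2m1, P2neg, <- INR_IZR_INZ. f_equal; field; lra.
Qed.

Lemma hp0_valid : is_hp_tiling 1 (fun _ => 0).
Proof.
  split; [lra|]. intros k j. exists (2 * j)%Z.
  unfold hp_rect, seg; cbn [fst snd rx ry rw].
  rewrite !P2m1, mult_IZR. split; apply f_equal2; apply f_equal2; rewrite ?plus_IZR, ?mult_IZR; field.
Qed.

Lemma pow_big r : exists n : nat, r <= 2 ^ n.
Proof.
  exists (Z.to_nat (up r)).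
  assert (H1 : forall n, INR n <= 2 ^ n).
  { induction n; [simpl; lra|]. rewrite S_INR. simpl.
    assert (1 <= 2 ^ n) by (apply pow_R1_Rle; lra). lra. }
  destruct (archimed r) as [Ha _].
  destruct (Z_le_gt_dec 0 (up r)) as [Hz|Hz].
  - specialize (H1 (Z.to_nat (up r))). rewrite INR_IZR_INZ, Z2Nat.id in H1 by lia. lra.
  - assert (IZR (up r) <= 0) by (apply IZR_le; lia).
    assert (0 < 2 ^ Z.to_nat (up r)) by (apply pow_lt; lra). lra.
Qed.

Lemma hp_step c a (Hhp : is_hp_tiling c a) k :
  exists j', a (k + 1)%Z = a k + IZR j' * c * powerRZ 2 k.
Proof.
  destruct Hhp as [_ H]. destruct (H (k + 1)%Z 0%Z) as [j' [H1 _]].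
  exists j'. unfold seg, hp_rect in H1; cbn [fst snd rx ry rw] in H1.
  replace (k + 1 - 1)%Z with k in H1 by lia. injection H1. intros. lra.
Qed.

Lemma grid c a (Hhp : is_hp_tiling c a) d : forall k t, exists m,
  a (k + Z.of_nat d)%Z + IZR t * c * powerRZ 2 (k + Z.of_nat d) - a k = IZR m * c * powerRZ 2 k.
Proof.
  induction d as [|d IH]; intros k t.
  - exists t. rewrite Z.add_0_r. ring.
  - destruct (hp_step c a Hhp (k + Z.of_nat d)) as [j' Hj].
    destruct (IH k (j' + 2 * t)%Z) as [m Hm]. exists m.
    replace (k + Z.of_nat (S d))%Z with (k + Z.of_nat d + 1)%Z by lia.
    rewrite Hj, (P2add (k + Z.of_nat d) 1), <- Hm, plus_IZR, mult_IZR. simpl. ring.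
Qed.

Definition lft c a (i : Z * Z) := a (fst i) + IZR (snd i) * c * powerRZ 2 (fst i).

Lemma bounds c a (L : list (Z * Z)) : exists lo hi kmax, forall i, In i L ->
  lo <= lft c a i /\ lft c a i + c * powerRZ 2 (fst i) <= hi /\ (fst i <= kmax)%Z.
Proof.
  induction L as [|i0 L IH].
  - exists 0, 0, 0%Z. intros i [].
  - destruct IH as [lo [hi [km H]]].
    exists (Rmin lo (lft c a i0)), (Rmax hi (lft c a i0 + c * powerRZ 2 (fst i0))), (Z.max km (fst i0)).
    intros i [<-|Hi].
    + split; [apply Rmin_r|]. split; [apply Rmax_r| lia].
    + destruct (H i Hi) as [h1 [h2 h3]].
      split; [eapply Rle_trans; [apply Rmin_l| exact h1]|].
      split; [eapply Rle_trans; [exact h2| apply Rmax_l]| lia].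
Qed.

Definition mkidx (n j : nat) : sq_index :=
  match lt_dec j (2 ^ n)%nat with
  | left H => exist (fun p : nat * nat => (snd p < 2 ^ fst p)%nat) (n, j) H
  | right _ => exist (fun p : nat * nat => (snd p < 2 ^ fst p)%nat) (0%nat, 0%nat) Nat.lt_0_1
  end.

Lemma mkidx_eq n j : (j < 2 ^ n)%nat ->
  sq_rect (mkidx n j) = Rect (INR j / 2 ^ n) (1 / 2 ^ (S n)) (1 / 2 ^ n).
Proof. intros H. unfold mkidx. destruct (lt_dec j (2 ^ n)%nat); [reflexivity| contradiction]. Qed.

Lemma patch {C : Type} (T : list (prototile C)) c a (Hhp : is_hp_tiling c a)
  (Hsq : tiles T sq_rect (fun _ => True)) (L : list (Z * Z)) :
  tiles T (hp_rect c a) (fun i => In i L).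
Proof.
  destruct Hsq as [f [Hf1 Hf2]].
  assert (hc : 0 < c) by apply Hhp.
  destruct (bounds c a L) as [lo [hi [kmax HB]]].
  destruct (pow_big ((hi - lo) / (c * powerRZ 2 kmax))) as [n Hn].
  set (K := (kmax + Z.of_nat n)%Z). set (Q := powerRZ 2 K).
  assert (HPk := P2pos kmax). assert (HQp : 0 < Q) by apply P2pos.
  assert (HQ : hi - lo <= c * Q).
  { unfold Q, K. rewrite P2add, P2nat.
    apply (Rmult_le_compat_r (c * powerRZ 2 kmax)) in Hn; [|nra].
    replace ((hi - lo) / (c * powerRZ 2 kmax) * (c * powerRZ 2 kmax)) with (hi - lo) in Hn
      by (field; lra). lra. }
  set (r := (lo - a K) / (c * Q)).
  set (t := (up r - 1)%Z). set (Y := a K + IZR t * c * Q).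
  assert (Hr : r * (c * Q) = lo - a K) by (unfold r; field; lra).
  destruct (archimed r) as [Ha1 Ha2].
  assert (Ht : IZR t = IZR (up r) - 1) by (unfold t; rewrite minus_IZR; reflexivity).
  assert (HY1 : Y <= lo).
  { assert (IZR t * (c * Q) <= r * (c * Q)) by (apply Rmult_le_compat_r; nra).
    unfold Y. lra. }
  assert (HY2 : hi <= Y + 2 * c * Q).
  { assert (r * (c * Q) <= (IZR t + 1) * (c * Q)) by (apply Rmult_le_compat_r; nra).
    unfold Y. lra. }
  assert (Hm : forall i : Z * Z, exists m, (fst i <= K)%Z ->
             Y - a (fst i) = IZR m * c * powerRZ 2 (fst i)).
  { intros [k j]. simpl. destruct (Z_le_dec k K) as [Hk|Hk].
    - destruct (grid c a Hhp (Z.to_nat (K - k)) k t) as [m Hm].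
      exists m. intros _. rewrite Z2Nat.id in Hm by lia.
      replace (k + (K - k))%Z with K in Hm by lia. unfold Y, Q. rewrite <- Hm. ring.
    - exists 0%Z. intros; lia. }
  set (mf := fun i => proj1_sig (constructive_indefinite_description _ (Hm i))).
  assert (Hmf : forall i, (fst i <= K)%Z -> Y - a (fst i) = IZR (mf i) * c * powerRZ 2 (fst i)).
  { intros i. unfold mf. destruct (constructive_indefinite_description _ (Hm i)); assumption. }
  set (phi := fun i : Z * Z => mkidx (Z.to_nat (K + 1 - fst i)) (Z.to_nat (snd i - mf i))).
  set (al := / (2 * c * Q)). set (be := - Y / (2 * c * Q)).
  assert (Hkey : forall i, In i L ->
     rx (sq_rect (phi i)) = al * rx (hp_rect c a i) + be /\
     ry (sq_rect (phi i)) = al * ry (hp_rect c a i) /\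
     rw (sq_rect (phi i)) = al * rw (hp_rect c a i)).
  { intros [k j] Hi. destruct (HB _ Hi) as [h1 [h2 h3]].
    unfold lft in h1, h2. simpl in h1, h2, h3.
    assert (HkK : (k <= K)%Z) by lia.
    specialize (Hmf (k, j) HkK). simpl in Hmf. set (m := mf (k, j)) in *.
    set (P := powerRZ 2 k) in *. assert (HP : 0 < P) by apply P2pos.
    set (n' := Z.to_nat (K + 1 - k)).
    assert (HE : 2 ^ n' = powerRZ 2 (K + 1 - k)) by (unfold n'; rewrite <- P2nat, Z2Nat.id by lia; reflexivity).
    assert (HPE : P * 2 ^ n' = 2 * Q).
    { rewrite HE. unfold P. rewrite <- P2add. replace (k + (K + 1 - k))%Z with (K + 1)%Z by lia.
      rewrite P2add. unfold Q. simpl. ring. }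
    assert (Hmj : IZR m <= IZR j).
    { apply (Rmult_le_reg_r (c * P)); [nra|]. nra. }
    apply le_IZR in Hmj.
    assert (Hup : IZR (j - m) + 1 <= 2 ^ n').
    { rewrite minus_IZR. apply (Rmult_le_reg_r (c * P)); [nra|]. nra. }
    set (j' := Z.to_nat (j - m)).
    assert (HJ : INR j' = IZR (j - m)) by (unfold j'; rewrite INR_IZR_INZ, Z2Nat.id by lia; reflexivity).
    assert (Hlt : (j' < 2 ^ n')%nat).
    { apply INR_lt. rewrite pow_INR, HJ. replace (INR 2) with 2 by (simpl; ring). lra. }
    unfold phi; simpl fst; simpl snd. fold n'. fold m. fold j'.
    rewrite (mkidx_eq _ _ Hlt). unfold hp_rect; cbn [fst snd rx ry rw].
    fold P. rewrite P2m1. fold P.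
    assert (H2n : 0 < 2 ^ n') by (apply pow_lt; lra).
    assert (HQ2 : 2 * c * Q = c * P * 2 ^ n') by nra.
    unfold al, be. rewrite HQ2. rewrite HJ, minus_IZR.
    assert (HYv : Y = a k + IZR m * c * P) by lra. rewrite HYv.
    split; [|split]; [field; split; lra | simpl; field; split; lra | field; split; lra]. }
  exists (fun x => f (exist _ (phi (proj1_sig x)) I)). split; [intros; apply Hf1|].
  intros x y e e' Hs. apply Hf2. simpl.
  destruct (Hkey _ (proj2_sig x)) as [h1 [h2 h3]].
  destruct (Hkey _ (proj2_sig y)) as [g1 [g2 g3]].
  rewrite (seg_aff _ _ al be e h1 h2 h3), (seg_aff _ _ al be e' g1 g2 g3), Hs. reflexivity.
Qed.

Definition enumZZ (n : nat) : Z * Z :=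
  let (p, q) := Cantor.of_nat n in
  let (x, y) := Cantor.of_nat p in
  let (u, v) := Cantor.of_nat q in
  ((Z.of_nat x - Z.of_nat y)%Z, (Z.of_nat u - Z.of_nat v)%Z).

Lemma enumZZ_surj : forall i, exists n, enumZZ n = i.
Proof.
  intros [z1 z2].
  exists (Cantor.to_nat (Cantor.to_nat (Z.to_nat z1, Z.to_nat (- z1)),
                         Cantor.to_nat (Z.to_nat z2, Z.to_nat (- z2)))).
  unfold enumZZ. rewrite !Cantor.cancel_of_to. f_equal; lia.
Qed.

Definition enumSq (n : nat) : sq_index :=
  let (x, y) := Cantor.of_nat n in mkidx x y.

Lemma enumSq_surj : forall i, exists n, enumSq n = i.
Proof.
  intros [[x y] H]. exists (Cantor.to_nat (x, y)). unfold enumSq.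
  rewrite Cantor.cancel_of_to. unfold mkidx.
  destruct (lt_dec y (2 ^ x)%nat) as [H'|H']; [| simpl in H; contradiction].
  f_equal. apply Peano_dec.le_unique.
Qed.

Lemma restrict {C J : Type} (T : list (prototile C)) (tile : J -> rect) (S : J -> Prop) :
  tiles T tile (fun _ => True) -> tiles T tile S.
Proof.
  intros [f [Hf1 Hf2]]. exists (fun x => f (exist _ (proj1_sig x) I)). split.
  - intros; apply Hf1.
  - intros x y e e' Hs. apply (Hf2 (exist _ (proj1_sig x) I) (exist _ (proj1_sig y) I)). exact Hs.
Qed.

Theorem lemma29 (C : Type) (T : list (prototile C)) :
  let tiles_square := tiles T sq_rect (fun _ => True) in
  let tiles_halfplanes :=
    forall (c : R) (a : Z -> R), is_hp_tiling c a ->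
      tiles T (hp_rect c a) (fun _ => True) in
  let tiles_finite_unions :=
    (forall L : list sq_index, tiles T sq_rect (fun i => In i L)) /\
    (forall (c : R) (a : Z -> R), is_hp_tiling c a ->
       forall L : list (Z * Z), tiles T (hp_rect c a) (fun i => In i L)) in
  (tiles_square <-> tiles_halfplanes) /\ (tiles_square <-> tiles_finite_unions).
Proof.
  intros tsq thp tfu.
  assert (A2 : tsq -> thp).
  { intros H c a Hhp. apply (compact T _ enumZZ enumZZ_surj). apply patch; assumption. }
  assert (A3 : thp -> tsq).
  { intros H. destruct (H 1 (fun _ => 0) hp0_valid) as [F [HF1 HF2]].
    set (hpidx := fun i : sq_index => ((- Z.of_nat (fst (proj1_sig i)))%Z, Z.of_nat (snd (proj1_sig i)))).
    assert (Heq : forall i, sq_rect i = hp_rect 1 (fun _ => 0) (hpidx i)).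
    { intros [[n j] Hj]. apply sq_hp. }
    exists (fun x => F (exist _ (hpidx (proj1_sig x)) I)). split; [intros; apply HF1|].
    intros x y e e' Hs. apply HF2. simpl. rewrite <- !Heq. exact Hs. }
  split; split.
  - exact A2.
  - exact A3.
  - intros H. split.
    + intros L. apply restrict. exact H.
    + intros c a Hhp L. apply patch; assumption.
  - intros [H _]. apply (compact T _ enumSq enumSq_surj). exact H.
Qed.
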